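(* Let $G=(V,E)$ be a comparability graph. Then the vertices of the graphical zonotope $\mathcal Z_G=\sum_{\{i,j\}\in E}[e_i-e_j,\,e_j-e_i]$ having maximal Euclidean distance to the origin are precisely those corresponding to the transitive orientations of $E$; that is, among all acyclic orientations $O$ of $E$, the Euclidean norm of the point $(\mathrm{outdeg}_O(v)-\mathrm{indeg}_O(v))_{v\in V}$ is maximized exactly when $O$ is transitive. These are the orientations whose induced posets have the maximal number $\varepsilon(G)$ of linear extensions.
   Context: A comparability graph is a simple undirected graph $G=(V,E)$ for which there is a partial order on $V$ under which two distinct vertices are comparable iff they are adjacent. An acyclic orientation of $E$ induces a partial order on $V$ ($u<v$ iff there is a directed path from $u$ to $v$); it is a transitive orientation if the comparability graph of this induced poset equals $G$. The vertices of $\mathcal Z_G$ correspond bijectively to acyclic orientations $O$ of $E$, the vertex corresponding to $O$ being $(\mathrm{outdeg}_O(v)-\mathrm{indeg}_O(v))_{v\in V}$. $\varepsilon(G)$ denotes the maximum over acyclic orientations of $E$ of the number of linear extensions (order-preserving bijections onto $[|V|]$) of the induced poset. *)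

(* Defs.v *)
From HB Require Import structures.
From mathcomp Require Import all_boot all_order all_algebra.
Set Implicit Arguments. Unset Strict Implicit. Unset Printing Implicit Defensive.
Import GRing.Theory Num.Theory.

Section Defs.
Variable V : finType.

Definition is_comparability_graph (e : rel V) : Prop :=
  exists lt : rel V,
    irreflexive lt /\ transitive lt /\
    (forall x y, e x y = lt x y || lt y x).

Definition is_orientation (e O : rel V) : bool :=
  [forall x, forall y, (O x y ==> e x y) && (e x y ==> (O x y (+) O y x))].

Definition acyclic_orientation (e O : rel V) : bool :=
  is_orientation e O && [forall x, forall y, O x y ==> ~~ connect O y x].

Definition induced_lt (O : rel V) : rel V :=
  fun u v => [exists w, O u w && connect O w v].

Definition transitive_orientation (e O : rel V) : bool :=
  acyclic_orientation e O &&
  [forall x, forall y, e x y == (induced_lt O x y || induced_lt O y x)].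

Definition outdeg (O : rel V) (v : V) : nat := #|[set w | O v w]|.
Definition indeg (O : rel V) (v : V) : nat := #|[set w | O w v]|.

Definition zvertex (O : rel V) (v : V) : int :=
  (outdeg O v)%:Z - (indeg O v)%:Z.

Definition sqnorm (O : rel V) : int := (\sum_(v : V) (zvertex O v) ^+ 2)%R.

(* linear extensions: order-preserving bijections V -> [|V|] *)
Definition linext_set (O : rel V) : {set {ffun V -> 'I_#|V|}} :=
  [set f : {ffun V -> 'I_#|V|} | injectiveb f &&
     [forall u, forall v, induced_lt O u v ==> (f u < f v)%N]].

Definition n_linext (O : rel V) : nat := #|linext_set O|.

Definition ffrel (F : {ffun V * V -> bool}) : rel V := fun x y => F (x, y).

Definition epsilon (e : rel V) : nat :=
  \max_(F : {ffun V * V -> bool} | acyclic_orientation e (ffrel F)) n_linext (ffrel F).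

End Defs.

(* Main.v *)
Require Import Defs.
From mathcomp Require Import all_boot all_order all_algebra.
From mathcomp Require Import zify.
Import GRing.Theory Num.Theory.
Set Implicit Arguments. Unset Strict Implicit. Unset Printing Implicit Defensive.

Section Basic.
Variable V : finType.
Implicit Types (e O r : rel V).

Lemma connect_trans_rel r a b : transitive r -> connect r a b -> a = b \/ r a b.
Proof.
move=> tr /connectP [p pth ->]; elim: p a pth => [|c p IH] a /=; first by left.
case/andP=> rac /IH [<-|]; first by right.
by move=> rcl; right; exact: tr rac rcl.
Qed.

Lemma orient_edge e O x y : is_orientation e O -> O x y -> e x y.
Proof. by move=> /forallP/(_ x)/forallP/(_ y)/andP[/implyP]. Qed.

Lemma orient_xor e O x y : is_orientation e O -> e x y -> O x y (+) O y x.
Proof. by move=> /forallP/(_ x)/forallP/(_ y)/andP[_ /implyP]. Qed.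

Lemma orient_nedge e O x y : is_orientation e O -> ~~ e x y -> O x y = false.
Proof. by move=> oO; apply: contraNF; exact: orient_edge. Qed.

Lemma orient_rev e O x y : is_orientation e O -> e x y -> O y x = ~~ O x y.
Proof. by move=> oO /(orient_xor oO); case: (O x y); case: (O y x). Qed.

Lemma acyc_orient e O : acyclic_orientation e O -> is_orientation e O.
Proof. by case/andP. Qed.

Lemma acyc_nocycle e O x y : acyclic_orientation e O -> O x y -> ~~ connect O y x.
Proof. by case/andP=> _ /forallP/(_ x)/forallP/(_ y)/implyP. Qed.

Lemma ilt_trans O : transitive (induced_lt O).
Proof.
move=> y x z /existsP[w /andP[Oxw cwy]] /existsP[w' /andP[Oyw' cw'z]].
apply/existsP; exists w; rewrite Oxw /=.
apply: connect_trans cwy _; apply: connect_trans cw'z; exact: connect1.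
Qed.

Lemma ilt_irr e O : acyclic_orientation e O -> irreflexive (induced_lt O).
Proof.
move=> aO x; apply/negbTE/negP; rewrite /induced_lt => /existsP[w /andP[Oxw cwx]].
by move: (acyc_nocycle aO Oxw); rewrite cwx.
Qed.

Lemma ilt_of_O O x y : O x y -> induced_lt O x y.
Proof. by move=> Oxy; apply/existsP; exists y; rewrite Oxy connect0. Qed.

Lemma ilt_edge e O x y : is_orientation e O -> e x y ->
  induced_lt O x y || induced_lt O y x.
Proof.
move=> oO exy; move: (orient_xor oO exy).
case Oxy: (O x y) => /= H; first by rewrite ilt_of_O.
by rewrite (ilt_of_O H) orbT.
Qed.

Lemma ilt_transrel r : transitive r -> induced_lt r =2 r.
Proof.
move=> tr x y; apply/existsP/idP => [[w /andP[rxw /(connect_trans_rel tr)[<-//|]]]|rxy].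
  exact: tr.
by exists y; rewrite rxy connect0.
Qed.

Lemma acyc_eq e r1 r2 : r1 =2 r2 -> acyclic_orientation e r1 -> acyclic_orientation e r2.
Proof.
move=> E /andP[/forallP o1 /forallP a1]; apply/andP; split.
  apply/forallP=> x; apply/forallP=> y; rewrite -[r2 x y]E -[r2 y x]E.
  by move: (o1 x) => /forallP/(_ y).
apply/forallP=> x; apply/forallP=> y; rewrite -[r2 x y]E -(eq_connect E).
by move: (a1 x) => /forallP/(_ y).
Qed.

Lemma strict_acyc e r : irreflexive r -> transitive r ->
  (forall x y, e x y = r x y || r y x) -> acyclic_orientation e r.
Proof.
move=> ir tr er; apply/andP; split.
  apply/forallP=> x; apply/forallP=> y; rewrite er.
  case rxy: (r x y) => /=; case ryx: (r y x) => //=.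
  by move: (tr _ _ _ rxy ryx); rewrite ir.
apply/forallP=> x; apply/forallP=> y; apply/implyP=> rxy; apply/negP.
case/(connect_trans_rel tr)=> [yx|ryx]; first by rewrite yx ir in rxy.
by move: (tr _ _ _ rxy ryx); rewrite ir.
Qed.

End Basic.

Section Part1.
Variable V : finType.
Variable e : rel V.
Hypothesis e_sym : symmetric e.
Hypothesis e_irr : irreflexive e.
Implicit Types (O r : rel V).

Definition b2i (b : bool) : int := Posz (b : nat).
Definition sg O x y : int := (b2i (O x y) - b2i (O y x))%R.
Definition Tm O (p : V * (V * V)) : int := (sg O p.1 p.2.1 * sg O p.1 p.2.2)%R.

Lemma zvertexE O v : zvertex O v = (\sum_w sg O v w)%R.
Proof.
rewrite /zvertex /outdeg /indeg /sg sumrB.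
have cE (P : pred V) : Posz #|[set w | P w]| = (\sum_w b2i (P w))%R.
  rewrite -sum1_card big_mkcond /= -natz natr_sum; apply: eq_bigr => w _.
  by rewrite inE /b2i; case: (P w).
by rewrite (cE (fun w => O v w)) (cE (fun w => O w v)).
Qed.

Lemma sqnormE O : sqnorm O = (\sum_(p : V * (V * V)) Tm O p)%R.
Proof.
rewrite /sqnorm.
under eq_bigr => v _ do rewrite zvertexE expr2 mulr_suml.
under eq_bigr => v _ do under eq_bigr => w _ do rewrite mulr_sumr.
under eq_bigr => v _ do rewrite pair_big /=.
by rewrite pair_big /=.
Qed.

Lemma sgN O x y : sg O y x = (- sg O x y)%R.
Proof. by rewrite /sg opprB. Qed.

Lemma sg_nedge O x y : is_orientation e O -> ~~ e x y -> sg O x y = 0%R.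
Proof.
move=> oO nxy; rewrite /sg (orient_nedge oO nxy) (orient_nedge oO) //.
by rewrite e_sym.
Qed.

Lemma sg_edge O x y : is_orientation e O -> e x y ->
  sg O x y = (if O x y then 1 else -1)%R.
Proof. by move=> oO exy; rewrite /sg (orient_rev oO exy); case: (O x y). Qed.

Lemma sg_sq O x y : is_orientation e O -> (sg O x y * sg O x y)%R = b2i (e x y).
Proof.
move=> oO; case exy: (e x y); last by rewrite sg_nedge ?exy // mulr0.
by rewrite sg_edge // /b2i; case: (O x y).
Qed.

Definition cnd (p : V * (V * V)) := (p.2.1 == p.2.2) || e p.2.1 p.2.2.
Definition tri (p : V * (V * V)) := [&& e p.1 p.2.1, e p.1 p.2.2 & e p.2.1 p.2.2].
Definition AO O p : int := if cnd p then Tm O p else 0%R.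
Definition BO O p : int := if cnd p then 0%R else Tm O p.
Definition B' p : int := if cnd p then 0%R else b2i (e p.1 p.2.1 && e p.1 p.2.2).
Definition D1 p : int := if p.2.1 == p.2.2 then b2i (e p.1 p.2.1) else 0%R.
Definition TT O p : int := if tri p then Tm O p else 0%R.

Lemma sqnorm_split O : sqnorm O = (\sum_p AO O p + \sum_p BO O p)%R.
Proof.
rewrite sqnormE -big_split /=; apply: eq_bigr => p _.
by rewrite /AO /BO; case: (cnd p); rewrite ?addr0 ?add0r.
Qed.

Lemma AO_split O p : is_orientation e O -> AO O p = (D1 p + TT O p)%R.
Proof.
move=> oO; case: p => v [w w']; rewrite /AO /D1 /TT /cnd /tri /Tm /=.
case: eqP => [<-|ww'] /=.
  by rewrite e_irr !andbF addr0 sg_sq.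
rewrite add0r; case ew: (e w w'); rewrite ?andbF //=.
case evw: (e v w); last by rewrite sg_nedge ?evw // mul0r.
case evw': (e v w') => //=.
by rewrite (@sg_nedge _ v w') ?evw' // mulr0.
Qed.

Lemma cyc_id O v w w' : acyclic_orientation e O -> e v w -> e v w' -> e w w' ->
  (sg O v w * sg O v w' + sg O w v * sg O w w' + sg O w' v * sg O w' w)%R = 1%R.
Proof.
move=> aO evw evw' eww'; have oO := acyc_orient aO.
rewrite (sgN O v w) (sgN O v w') (sgN O w w').
rewrite (sg_edge oO evw) (sg_edge oO evw') (sg_edge oO eww').
case a: (O v w); case b: (O w w'); case c: (O v w') => //=.
- exfalso; move: (acyc_nocycle aO a) => /negP; apply.
  apply: connect_trans (connect1 b) (connect1 _).
  by move: (orient_rev oO evw'); rewrite c => ->.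
- exfalso; move: (acyc_nocycle aO c) => /negP; apply.
  have h1 : O w' w by rewrite (orient_rev oO eww') b.
  have h2 : O w v by rewrite (orient_rev oO evw) a.
  exact: connect_trans (connect1 h1) (connect1 h2).
Qed.

Lemma TT3 O : acyclic_orientation e O ->
  (\sum_p TT O p + \sum_p TT O p + \sum_p TT O p)%R = (\sum_p b2i (tri p))%R.
Proof.
move=> aO.
pose h1 (p : V * (V * V)) := (p.2.1, (p.1, p.2.2)).
pose h2 (p : V * (V * V)) := (p.2.2, (p.1, p.2.1)).
have ih1 : injective h1 by case=> a [b c] [a' [b' c']] [-> -> ->].
have ih2 : injective h2 by case=> a [b c] [a' [b' c']] [-> -> ->].
have E1 : (\sum_p TT O p = \sum_p TT O (h1 p))%R := reindex_inj ih1.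
have E2 : (\sum_p TT O p = \sum_p TT O (h2 p))%R := reindex_inj ih2.
rewrite {2}E1 {2}E2 -!big_split /=.
apply: eq_bigr; case=> v [w w'] _; rewrite /TT /tri /Tm /=.
case evw: (e v w); case evw': (e v w'); case eww': (e w w') => //=;
  rewrite ?(e_sym w v) ?(e_sym w' v) ?(e_sym w' w) ?evw ?evw' ?eww' //= ?addr0.
by rewrite cyc_id.
Qed.

Lemma AO_const O1 O2 : acyclic_orientation e O1 -> acyclic_orientation e O2 ->
  (\sum_p AO O1 p)%R = (\sum_p AO O2 p)%R.
Proof.
move=> a1 a2.
rewrite (eq_bigr _ (fun p _ => AO_split p (acyc_orient a1))).
rewrite (eq_bigr _ (fun p _ => AO_split p (acyc_orient a2))).
rewrite !big_split /=; congr (_ + _)%R.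
have h : forall x y : int, (x + x + x = y + y + y)%R -> x = y by move=> x y; lia.
by apply: h; rewrite TT3 // TT3.
Qed.

Definition nomixed O := forall v w w', O w v -> O v w' -> e w w'.

Lemma BO_le O p : is_orientation e O -> (BO O p <= B' p)%R.
Proof.
move=> oO; case: p => v [w w']; rewrite /BO /B' /Tm; case: (cnd _) => //=.
case evw: (e v w); last by rewrite sg_nedge ?evw // mul0r.
case evw': (e v w'); last by rewrite (@sg_nedge _ v w') ?evw' // mulr0.
by rewrite !sg_edge //; case: (O v w); case: (O v w').
Qed.

Lemma BO_eq O p : is_orientation e O -> nomixed O -> BO O p = B' p.
Proof.
move=> oO nm; case: p => v [w w']; rewrite /BO /B' /Tm /cnd /=.
case: eqP => //= ww'; case eww': (e w w') => //=.
case evw: (e v w); last by rewrite sg_nedge ?evw // mul0r.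
case evw': (e v w'); last by rewrite (@sg_nedge _ v w') ?evw' // mulr0.
rewrite !sg_edge //.
case a: (O v w); case c: (O v w') => //=.
- have : O w' v by rewrite (orient_rev oO evw') c.
  move=> /nm /(_ a); rewrite e_sym eww' //.
- have : O w v by rewrite (orient_rev oO evw) a.
  by move=> /nm /(_ c); rewrite eww'.
Qed.

Lemma BO_eq_nomixed O : is_orientation e O -> (forall p, BO O p = B' p) -> nomixed O.
Proof.
move=> oO H v w w' Owv Ovw'; case neww': (e w w') => //.
have evw : e v w by rewrite e_sym; exact: orient_edge oO Owv.
have evw' : e v w' by exact: orient_edge oO Ovw'.
have ww' : w != w'.
  apply/eqP=> ww'; subst w'.
  by rewrite (orient_rev oO evw) Ovw' in Owv.
move: (H (v, (w, w'))); rewrite /BO /B' /Tm /cnd /= (negbTE ww') neww' /=.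
rewrite !sg_edge // evw evw' Ovw'.
by rewrite e_sym in evw; rewrite (orient_rev oO evw) Owv.
Qed.

Lemma trans_nomixed O : transitive_orientation e O -> nomixed O.
Proof.
case/andP=> _ /forallP H v w w' Owv Ovw'.
move: (H w) => /forallP/(_ w')/eqP ->.
by rewrite (ilt_trans (ilt_of_O Owv) (ilt_of_O Ovw')).
Qed.

Lemma nomixed_trans O : acyclic_orientation e O -> nomixed O -> transitive_orientation e O.
Proof.
move=> aO nm; have oO := acyc_orient aO.
have trO : transitive O.
  move=> v u w Ouv Ovw.
  have euw := nm _ _ _ Ouv Ovw.
  move: (orient_xor oO euw); case Ouw: (O u w) => //= Owu.
  move: (acyc_nocycle aO Owu) => /negP; case.
  exact: connect_trans (connect1 Ouv) (connect1 Ovw).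
rewrite /transitive_orientation aO /=.
apply/forallP=> x; apply/forallP=> y; rewrite !ilt_transrel //.
case exy: (e x y); first by rewrite eq_sym; apply/eqP; move: (orient_xor oO exy); case: (O x y); case: (O y x).
by rewrite (@orient_nedge _ e O x y) ?exy // (@orient_nedge _ e O y x) // e_sym exy.
Qed.

End Part1.

Section Count.
Variable V : finType.
Local Notation n := #|V|.
Implicit Types (r : rel V) (m : nat).

Definition Lr r : {set {ffun V -> 'I_n}} :=
  [set f : {ffun V -> 'I_n} | injectiveb f && [forall u, forall v, r u v ==> (f u < f v)%N]].

Lemma linextE (O : rel V) : linext_set O = Lr (induced_lt O).
Proof. by []. Qed.

Definition IOP r m : {set {ffun V -> 'I_m}} :=
  [set f : {ffun V -> 'I_m} | injectiveb f && [forall u, forall v, r u v ==> (f u < f v)%N]].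
Definition OPs r m : {set {ffun V -> 'I_m}} :=
  [set f : {ffun V -> 'I_m} | [forall u, forall v, r u v ==> (f u < f v)%N]].
Definition Incr m : {set {ffun 'I_n -> 'I_m}} :=
  [set a : {ffun 'I_n -> 'I_m} | [forall i : 'I_n, forall j : 'I_n, (i < j)%N ==> (a i < a j)%N]].
Definition NI m : {set {ffun V -> 'I_m}} := [set f : {ffun V -> 'I_m} | ~~ injectiveb f].

Definition rk (g : V -> nat) x := #|[set y | g y < g x]|.

Lemma rk_lt (g : V -> nat) x y : g y < g x -> rk g y < rk g x.
Proof.
move=> gyx; apply: proper_card; apply/properP; split.
  by apply/subsetP=> z; rewrite !inE => h; exact: ltn_trans h gyx.
by exists y; rewrite !inE ?ltnn.
Qed.

Lemma rk_bound (g : V -> nat) x : rk g x < n.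
Proof.
rewrite -cardsT; apply: proper_card; apply/properP; split; first exact: subsetT.
by exists x; rewrite !inE ?ltnn.
Qed.

Lemma rk_inj (g : V -> nat) : injective g -> injective (rk g).
Proof.
move=> ig x y; case: (ltngtP (g x) (g y)) => [h|h|/ig //].
- by move=> E; move: (rk_lt h); rewrite E ltnn.
- by move=> E; move: (rk_lt h); rewrite E ltnn.
Qed.

Lemma card_ord_lt (N k : nat) : k <= N -> #|[set i : 'I_N | (i < k)%N]| = k.
Proof.
move=> kN.
have -> : [set i : 'I_N | (i < k)%N] = [set widen_ord kN j | j : 'I_k].
  apply/setP=> i; rewrite !inE; apply/idP/imsetP => [ik|[j _ ->]].
    by exists (Ordinal ik) => //; apply: val_inj.
  exact: (ltn_ord j).
rewrite card_imset ?card_ord //.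
by move=> a b /(congr1 val) /= /val_inj.
Qed.

Lemma rk_perm (s : V -> 'I_n) x : injective s -> (s x : nat) = rk (fun y => s y : nat) x.
Proof.
move=> inj_s; rewrite /rk.
have onto : forall i, i \in codom s by move=> i; apply: inj_card_onto; rewrite // card_ord.
have E : [set i : 'I_n | (i < s x)%N] = s @: [set y | (s y < s x)%N].
  apply/setP=> i; rewrite !inE; apply/idP/imsetP => [ilt|[y]].
    exists (iinv (onto i)); last by rewrite f_iinv.
    by rewrite inE f_iinv.
  by rewrite inE => h ->.
rewrite -(card_imset _ inj_s) -E card_ord_lt //.
exact: ltnW (ltn_ord _).
Qed.

Lemma incr_ltE m a (i j : 'I_n) : a \in Incr m -> (a i < a j)%N = (i < j)%N.
Proof.
rewrite inE => /forallP H.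
have lt : forall i j : 'I_n, (i < j)%N -> (a i < a j)%N.
  by move=> i' j' h; move: (H i') => /forallP/(_ j')/implyP; apply.
case: (ltngtP i j) => [h|h|h]; first by rewrite lt.
  by apply/negbTE; rewrite -leqNgt ltnW // lt.
by rewrite (val_inj h) ltnn.
Qed.

Definition comp m (p : {ffun V -> 'I_n} * {ffun 'I_n -> 'I_m}) : {ffun V -> 'I_m} :=
  [ffun x => p.2 (p.1 x)].

Lemma Lr_inj r s : s \in Lr r -> injective s.
Proof. by rewrite inE => /andP[/injectiveP]. Qed.

Lemma Lr_lt r s u v : s \in Lr r -> r u v -> (s u < s v)%N.
Proof. by rewrite inE => /andP[_ /forallP/(_ u)/forallP/(_ v)/implyP]. Qed.

Lemma incr_inj m a : a \in Incr m -> injective a.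
Proof.
move=> aI i j E; apply: val_inj; case: (ltngtP i j) => // h.
  by move: h; rewrite -(incr_ltE _ _ aI) E ltnn.
by move: h; rewrite -(incr_ltE _ _ aI) E ltnn.
Qed.

Lemma IOP_card r m : #|IOP r m| = #|Lr r| * #|Incr m|.
Proof.
rewrite -cardsX.
have -> : IOP r m = (@comp m) @: setX (Lr r) (Incr m).
  apply/setP=> f; apply/idP/imsetP => [|[[s a]]]; last first.
    rewrite inE /= => /andP[sL aI] ->; rewrite inE; apply/andP; split.
      apply/injectiveP=> x y; rewrite !ffunE /= => E; apply: (Lr_inj sL).
      apply: (incr_inj aI); exact E.
    apply/forallP=> u; apply/forallP=> v; apply/implyP=> ruv.
    by rewrite !ffunE /= (incr_ltE _ _ aI) (Lr_lt sL ruv).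
  rewrite inE => /andP[/injectiveP fi /forallP fop].
  pose g := fun x => (f x : nat).
  have gi : injective g by move=> x y /val_inj /fi.
  pose s := [ffun x => Ordinal (rk_bound g x)] : {ffun V -> 'I_n}.
  have si : injective s by move=> x y; rewrite !ffunE => /(congr1 val) /= /(rk_inj gi).
  have sL : s \in Lr r.
    rewrite inE; apply/andP; split; first by apply/injectiveP.
    apply/forallP=> u; apply/forallP=> v; apply/implyP=> ruv; rewrite !ffunE /=.
    by apply: rk_lt; move: (fop u) => /forallP/(_ v)/implyP; apply.
  have onto : forall i, i \in codom s by move=> i; apply: inj_card_onto; rewrite // card_ord.
  pose a := [ffun i => f (iinv (onto i))] : {ffun 'I_n -> 'I_m}.
  have aI : a \in Incr m.
    rewrite inE; apply/forallP=> i; apply/forallP=> j; apply/implyP=> ij.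
    rewrite !ffunE; set x := iinv (onto i); set y := iinv (onto j).
    have sx : s x = i by rewrite f_iinv.
    have sy : s y = j by rewrite f_iinv.
    case: (ltngtP (f x) (f y)) => // [h|h].
      have := rk_lt (g:=g) h; rewrite -/g.
      have -> : rk g y = s y by rewrite ffunE.
      have -> : rk g x = s x by rewrite ffunE.
      by rewrite sx sy ltnNge ltnW.
    have xy : x = y by apply: fi; apply: val_inj.
    by move: ij; rewrite -sx -sy xy ltnn.
  exists (s, a); first by rewrite inE /= sL aI.
  apply/ffunP=> x; rewrite !ffunE /=.
  apply: congr1; apply: si; rewrite f_iinv ffunE //.
rewrite card_in_imset // => -[s a] -[s' a'] /setXP[sL aI] /setXP[s'L a'I] E.
have key : forall x y, (s y < s x)%N = (s' y < s' x)%N.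
  move=> x y; rewrite -(incr_ltE (s y) (s x) aI) -(incr_ltE (s' y) (s' x) a'I).
  by have := congr1 (fun h : {ffun V -> 'I_m} => h y) E; have := congr1 (fun h : {ffun V -> 'I_m} => h x) E;
     rewrite !ffunE /= => -> ->.
have ss : s = s'.
  apply/ffunP=> x; apply: val_inj => /=.
  rewrite (rk_perm x (Lr_inj sL)) (rk_perm x (Lr_inj s'L)) /rk.
  by apply: eq_card => y; rewrite !inE key.
subst s'; congr (_, _); apply/ffunP=> i.
have onto : i \in codom s by apply: inj_card_onto; rewrite ?card_ord //; exact: Lr_inj sL.
have := congr1 (fun h : {ffun V -> 'I_m} => h (iinv onto)) E; rewrite !ffunE /= f_iinv //.
Qed.

Lemma card_bigcup_le (I T : finType) (P : pred I) (F : I -> {set T}) :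
  #|\bigcup_(i | P i) F i| <= \sum_(i | P i) #|F i|.
Proof.
apply: (big_ind2 (fun (A : {set T}) b => #|A| <= b)) => //; first by rewrite cards0.
move=> A a B b hA hB; apply: leq_trans (leq_card_setU A B) _; exact: leq_add.
Qed.

Lemma eqpair_card m (x y : V) : x != y -> #|[set f : {ffun V -> 'I_m} | f x == f y]| <= m ^ n.-1.
Proof.
move=> xy.
pose T := {z : V | z != y}.
pose res (f : {ffun V -> 'I_m}) : {ffun T -> 'I_m} := [ffun z => f (val z)].
have cT : #|{ffun T -> 'I_m}| = m ^ n.-1.
  by rewrite card_ffun card_ord card_sig -(cardC1 y).
rewrite -cT -(card_in_imset (f := res)); first exact: max_card.
move=> f f'; rewrite !inE => /eqP fxy /eqP f'xy E; apply/ffunP=> z.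
case: (eqVneq z y) => [->|zy].
  rewrite -fxy -f'xy.
  by have := congr1 (fun h : {ffun T -> 'I_m} => h (exist _ x xy)) E; rewrite !ffunE.
by have := congr1 (fun h : {ffun T -> 'I_m} => h (exist _ z zy)) E; rewrite !ffunE.
Qed.

Lemma NI_card m : #|NI m| <= n * n * m ^ n.-1.
Proof.
have sub : NI m \subset \bigcup_(p : V * V | p.1 != p.2) [set f : {ffun V -> 'I_m} | f p.1 == f p.2].
  apply/subsetP=> f; rewrite inE => /injectivePn [x [y xy fxy]].
  by apply/bigcupP; exists (x, y) => //; rewrite inE fxy.
apply: leq_trans (subset_leq_card sub) _.
apply: leq_trans (card_bigcup_le _ _) _.
apply: (@leq_trans (\sum_(p : V * V | p.1 != p.2) m ^ n.-1)).
  by apply: leq_sum => p; exact: eqpair_card.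
rewrite big_mkcond /=.
apply: (@leq_trans (\sum_(p : V * V) m ^ n.-1)).
  by apply: leq_sum => p _; case: ifP.
by rewrite sum_nat_const card_prod.
Qed.

Lemma OP_le r m : #|OPs r m| <= #|IOP r m| + #|NI m|.
Proof.
apply: leq_trans (leq_card_setU _ _).
apply: subset_leq_card; apply/subsetP=> f; rewrite !inE => H.
by case: (injectiveb f); rewrite ?H.
Qed.

Lemma IOP_le r m : #|IOP r m| <= #|OPs r m|.
Proof. by apply: subset_leq_card; apply/subsetP=> f; rewrite !inE => /andP[]. Qed.

Lemma Incr_lb t : t ^ n <= #|Incr (n * t)|.
Proof.
have bnd : forall (h : {ffun 'I_n -> 'I_t}) (i : 'I_n), i * t + h i < n * t.
  move=> h i; have := ltn_ord i; have := ltn_ord (h i); nia.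
pose mk (h : {ffun 'I_n -> 'I_t}) : {ffun 'I_n -> 'I_(n * t)} := [ffun i => Ordinal (bnd h i)].
have -> : t ^ n = #|[set mk h | h : {ffun 'I_n -> 'I_t}]|.
  rewrite card_imset ?card_ffun ?card_ord //.
  move=> h h' E; apply/ffunP=> i; apply: val_inj => /=.
  have := congr1 (fun a : {ffun 'I_n -> 'I_(n * t)} => nat_of_ord (a i)) E; rewrite !ffunE /= => /addnI; first [exact: val_inj | done].
apply: subset_leq_card; apply/subsetP=> a /imsetP[h _ ->]; rewrite inE.
apply/forallP=> i; apply/forallP=> j; apply/implyP=> ij; rewrite !ffunE /=.
have : i.+1 * t <= j * t by rewrite leq_mul2r ij orbT.
have := ltn_ord (h i); rewrite mulSn => h1 h2.
rewrite ltn_addr // (leq_trans _ h2) // [t + _]addnC -addnS leq_add2l //.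
Qed.

End Count.

Section Transfer.
Variable V : finType.
Local Notation n := #|V|.
Implicit Types (K : {set V}).

Definition chain (r : rel V) (K : {set V}) :=
  [forall x in K, forall y in K, (x != y) ==> (r x y || r y x)].
Definition W (r : rel V) m : {set {ffun V -> 'I_m}} :=
  [set g : {ffun V -> 'I_m} | [forall K : {set V}, chain r K ==> (\sum_(x in K) (g x).+1 <= m)]].

Lemma chainP r K : reflect (forall x y, x \in K -> y \in K -> x != y -> r x y || r y x) (chain r K).
Proof.
apply: (iffP forall_inP) => [H x y xK yK xy|H x xK].
  by move: (H x xK) => /forall_inP/(_ y yK)/implyP; apply.
by apply/forall_inP=> y yK; apply/implyP; exact: H.
Qed.

Lemma chain_sub r K K' : K' \subset K -> chain r K -> chain r K'.
Proof.
move=> /subsetP sub /chainP H; apply/chainP=> x y xK yK; apply: H; exact: sub.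
Qed.

Lemma W_sum r m g K : g \in W r m -> chain r K -> \sum_(x in K) (g x).+1 <= m.
Proof. by rewrite inE => /forallP/(_ K)/implyP. Qed.

Lemma W_mono (P Q : rel V) m : (forall x y, P x y -> Q x y || Q y x) -> W Q m \subset W P m.
Proof.
move=> PQ; apply/subsetP=> g gW; rewrite inE; apply/forallP=> K; apply/implyP=> /chainP cK.
apply: W_sum gW _; apply/chainP=> x y xK yK xy.
by case/orP: (cK x y xK yK xy) => [/PQ|/PQ]; rewrite // orbC.
Qed.

Variable r : rel V.
Hypothesis ir : irreflexive r.
Hypothesis tr : transitive r.

Definition npred x := #|[set y | r y x]|.

Lemma npred_lt x y : r y x -> npred y < npred x.
Proof.
move=> ryx; apply: proper_card; apply/properP; split.
  by apply/subsetP=> z; rewrite !inE => rzy; exact: tr rzy ryx.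
by exists y; rewrite !inE ?ir.
Qed.

Lemma npred_ind (P : V -> Prop) : (forall x, (forall y, r y x -> P y) -> P x) -> forall x, P x.
Proof.
move=> H.
suff : forall k x, npred x < k -> P x by move=> h x; exact: h _ x (ltnSn _).
elim=> // k IH x xk; apply: H => y ryx; apply: IH.
by move: (npred_lt ryx) xk; lia.
Qed.

Lemma chain_top K : chain r K -> K != set0 ->
  exists2 z, z \in K & forall x, x \in K -> x != z -> r x z.
Proof.
move=> /chainP cK /set0Pn [x0 x0K].
case: (arg_maxnP npred x0K) => z zK zmax.
exists z => // x xK xz; case/orP: (cK x z xK zK xz) => // rzx.
by move: (zmax x xK) (npred_lt rzx); lia.
Qed.

Section T1.
Variable m : nat.

Definition hf (f : {ffun V -> 'I_m}) x := \max_(y | r y x) (f y).+1.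

Definition phi (f : {ffun V -> 'I_m}) : {ffun V -> 'I_m} :=
  [ffun x => Ordinal (leq_ltn_trans (leq_subr (hf f x) (f x)) (ltn_ord (f x)))].

Lemma OPs_lt f x y : f \in OPs r m -> r x y -> f x < f y.
Proof. by rewrite inE => /forallP/(_ x)/forallP/(_ y)/implyP; apply. Qed.

Lemma hf_le f x : f \in OPs r m -> hf f x <= f x.
Proof. by move=> fO; apply/bigmax_leqP=> y ryx; exact: OPs_lt fO ryx. Qed.

Lemma phi_sum f : f \in OPs r m -> forall k K z, #|K| <= k -> chain r K -> z \in K ->
  (forall x, x \in K -> x != z -> r x z) -> \sum_(x in K) (phi f x).+1 <= (f z).+1.
Proof.
move=> fO; elim=> [|k IH] K z cK chK zK top.
  by move: cK; rewrite (cardD1 z) zK.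
rewrite (big_setD1 z zK) /= ffunE /=.
have hz := hf_le z fO.
case: (eqVneq (K :\ z) set0) => [->|ne].
  by rewrite big_set0 addn0 ltnS leq_subr.
have chK' : chain r (K :\ z) by apply: chain_sub chK; exact: subsetDl.
case: (chain_top chK' ne) => z' z'K top'.
move: (z'K); rewrite !inE => /andP[z'z z'K0].
have rz'z := top z' z'K0 z'z.
have IHs := IH (K :\ z) z'.
have : \sum_(x in K :\ z) (phi f x).+1 <= (f z').+1.
  apply: IHs => //.
    by move: cK; rewrite (cardsD1 z K) zK.
have : (f z').+1 <= hf f z by apply: (leq_bigmax_cond (F := fun y => (f y).+1)).
move: hz => hz h1 h2.
apply: leq_trans (leq_add (leqnn _) (leq_trans h2 h1)) _.
by rewrite addSn subnK.
Qed.

Lemma phi_W f : f \in OPs r m -> phi f \in W r m.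
Proof.
move=> fO; rewrite inE; apply/forallP=> K; apply/implyP=> chK.
case: (eqVneq K set0) => [->|ne]; first by rewrite big_set0.
case: (chain_top chK ne) => z zK top.
apply: leq_trans (phi_sum fO (leqnn _) chK zK top) _.
exact: ltn_ord.
Qed.

Lemma phi_inj : {in OPs r m &, injective phi}.
Proof.
move=> f f' fO f'O E; apply/ffunP; apply: npred_ind => x IH.
have hE : hf f x = hf f' x.
  by apply: eq_bigr => y ryx; rewrite (IH y ryx).
have := congr1 (fun h : {ffun V -> 'I_m} => nat_of_ord (h x)) E; rewrite !ffunE /= hE => h.
apply: ord_inj; move: (hf_le x fO) (hf_le x f'O) h; rewrite hE.
move: (nat_of_ord (f x)) (nat_of_ord (f' x)) (hf f' x) => a b c; lia.
Qed.

Lemma T1 : #|OPs r m| <= #|W r m|.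
Proof.
rewrite -(card_in_imset phi_inj); apply: subset_leq_card.
by apply/subsetP=> g /imsetP[f fO ->]; exact: phi_W.
Qed.
End T1.

Section T2.
Variable m : nat.
Implicit Types (g : {ffun V -> 'I_m}).

Definition topc x K := [&& chain r K, x \in K & [forall y in K, (y != x) ==> r y x]].
Definition Mg (g : {ffun V -> 'I_m}) x := \max_(K | topc x K) \sum_(y in K) (g y).+1.

Lemma topc1 x : topc x [set x].
Proof.
rewrite /topc set11 /=; apply/andP; split.
  by apply/chainP=> a b; rewrite !inE => /eqP-> /eqP->; rewrite eqxx.
by apply/forall_inP=> y; rewrite inE => ->.
Qed.

Lemma Mg_ge g x : (g x).+1 <= Mg g x.
Proof.
have := leq_bigmax_cond (F := fun K => \sum_(y in K) (g y).+1) _ (topc1 x).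
by rewrite big_set1.
Qed.

Lemma Mg_W g x : g \in W r m -> Mg g x <= m.
Proof. move=> gW; apply/bigmax_leqP=> K /and3P[cK _ _]; exact: W_sum gW cK. Qed.

Lemma topc_top x K y : topc x K -> y \in K -> y != x -> r y x.
Proof. by case/and3P=> _ _ /forall_inP/(_ y) H yK; move/implyP: (H yK). Qed.

Lemma Mg_step g x y : r y x -> (g x).+1 + Mg g y <= Mg g x.
Proof.
move=> ryx; rewrite -leq_subRL; last exact: Mg_ge.
apply/bigmax_leqP=> K tK; rewrite leq_subRL; last exact: Mg_ge.
have xK : x \notin K.
  apply/negP=> xK; case: (eqVneq x y) => [xy|xy].
    by rewrite xy ir in ryx.
  by move: (tr (topc_top tK xK xy) ryx); rewrite ir.
have tK' : topc x (x |: K).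
  case/and3P: (tK) => /chainP cK yK _; rewrite /topc setU11 /=; apply/andP; split.
    apply/chainP=> a b; rewrite !inE => /orP[/eqP->|aK] /orP[/eqP->|bK]; rewrite ?eqxx //.
    - move=> xb; have : r b x by case: (eqVneq b y) => [->//|bny]; exact: tr (topc_top tK bK bny) ryx.
      by move=> ->; rewrite orbT.
    - move=> ax; have : r a x by case: (eqVneq a y) => [->//|ay]; exact: tr (topc_top tK aK ay) ryx.
      by move=> ->.
    - exact: cK.
  apply/forall_inP=> z; rewrite !inE => /orP[/eqP->|zK]; first by rewrite eqxx.
  apply/implyP=> zx; case: (eqVneq z y) => [->//|zy]; exact: tr (topc_top tK zK zy) ryx.
have := leq_bigmax_cond (F := fun K => \sum_(y in K) (g y).+1) _ tK'.
by rewrite big_setU1.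
Qed.

Lemma Mg_rec g x : Mg g x = (g x).+1 + \max_(y | r y x) Mg g y.
Proof.
apply/eqP; rewrite eqn_leq; apply/andP; split; last first.
  rewrite -leq_subRL; last exact: Mg_ge.
  apply/bigmax_leqP=> y ryx; rewrite leq_subRL; last exact: Mg_ge.
  exact: Mg_step.
apply/bigmax_leqP=> K tK.
have xK : x \in K by case/and3P: tK.
rewrite (big_setD1 x xK) /= leq_add2l.
case: (eqVneq (K :\ x) set0) => [->|ne]; first by rewrite big_set0.
have chK' : chain r (K :\ x) by case/and3P: tK => cK _ _; apply: chain_sub cK; exact: subsetDl.
case: (chain_top chK' ne) => y yK' top.
move: (yK'); rewrite !inE => /andP[yx yK].
have ryx := topc_top tK yK yx.
have tK' : topc y (K :\ x).
  rewrite /topc chK' yK' /=; apply/forall_inP=> z zK'; apply/implyP; exact: top.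
apply: leq_trans (leq_bigmax_cond (F := fun K => \sum_(y in K) (g y).+1) _ tK') _.
exact: (leq_bigmax_cond (F := Mg g)).
Qed.

Lemma psi_bnd g x : (minn (Mg g x) m).-1 < m.
Proof. have := ltn_ord (g x); move: (nat_of_ord (g x)) (Mg g x) => a b; lia. Qed.

Definition psi g : {ffun V -> 'I_m} := [ffun x => Ordinal (psi_bnd g x)].

Lemma psiE g x : g \in W r m -> (psi g x : nat) = (Mg g x).-1.
Proof. by move=> gW; rewrite ffunE /= (minn_idPl (Mg_W x gW)). Qed.

Lemma psi_OP g : g \in W r m -> psi g \in OPs r m.
Proof.
move=> gW; rewrite inE; apply/forallP=> y; apply/forallP=> x; apply/implyP=> ryx.
rewrite !psiE //; have := Mg_step g ryx; have := Mg_ge g y.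
move: (Mg g y) (Mg g x) (nat_of_ord (g x)) (nat_of_ord (g y)) => a b c d; lia.
Qed.

Lemma psi_inj : {in W r m &, injective psi}.
Proof.
move=> g g' gW g'W E.
have ME : forall x, Mg g x = Mg g' x.
  move=> x; have := congr1 (fun h : {ffun V -> 'I_m} => nat_of_ord (h x)) E.
  rewrite /= !psiE //; have := Mg_ge g x; have := Mg_ge g' x.
  move: (Mg g x) (Mg g' x) (nat_of_ord (g x)) (nat_of_ord (g' x)) => a b c d; lia.
apply/ffunP=> x; apply: ord_inj.
have := Mg_rec g x; rewrite ME Mg_rec.
have -> : \max_(y | r y x) Mg g y = \max_(y | r y x) Mg g' y by apply: eq_bigr => y _; rewrite ME.
move: (\max_(y | r y x) Mg g' y) (nat_of_ord (g x)) (nat_of_ord (g' x)) => a c d; lia.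
Qed.

Lemma T2 : #|W r m| <= #|OPs r m|.
Proof.
rewrite -(card_in_imset psi_inj); apply: subset_leq_card.
by apply/subsetP=> f /imsetP[g gW ->]; exact: psi_OP.
Qed.

End T2.

End Transfer.

Section Final.
Variable V : finType.
Local Notation n := #|V|.

Lemma sum_eq1 (K : {set V}) w : \sum_(x in K) (x == w) = (w \in K).
Proof.
case: (boolP (w \in K)) => wK.
  rewrite (big_setD1 w wK) eqxx big1 //= => x; rewrite !inE => /andP[/negbTE -> _].
  by [].
rewrite big1 // => x xK; case: eqP => // xw; by rewrite -xw xK in wK.
Qed.

Lemma n_pos (u : V) : 0 < n.
Proof. by have := rk_bound (fun _ => 0) u; lia. Qed.

Lemma W_gap (P Q : rel V) (u v : V) t : Q u v -> ~~ (P u v || P v u) -> u != v ->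
  t ^ n <= #|W P (3 * n * t) :\: W Q (3 * n * t)|.
Proof.
move=> Quv nP uv; have n0 := n_pos u.
set m := 3 * n * t.
pose off x := 2 * n * t * (x == u) + 2 * n * t * (x == v).
have offb : forall x, off x <= 2 * n * t.
  by move=> x; rewrite /off; case: (eqVneq x u) => [->|_]; rewrite ?(negbTE uv) /=; lia.
have bnd : forall (h : {ffun V -> 'I_t}) x, h x + off x < m.
  move=> h x; have := ltn_ord (h x); have := offb x; rewrite /m.
  move: (nat_of_ord (h x)) (off x) => a b; nia.
pose chi (h : {ffun V -> 'I_t}) : {ffun V -> 'I_m} := [ffun x => Ordinal (bnd h x)].
have -> : t ^ n = #|[set chi h | h : {ffun V -> 'I_t}]|.
  rewrite card_imset ?card_ffun ?card_ord //.
  move=> h h' E; apply/ffunP=> x; apply: ord_inj.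
  have := congr1 (fun a : {ffun V -> 'I_m} => nat_of_ord (a x)) E; rewrite !ffunE /=.
  move: (nat_of_ord (h x)) (nat_of_ord (h' x)) (off x) => a b c; lia.
apply: subset_leq_card; apply/subsetP=> g /imsetP[h _ ->]; rewrite !inE; apply/andP; split.
  apply/negP=> /forallP/(_ [set u; v])/implyP; rewrite big_setU1 ?inE //= big_set1 !ffunE /=.
  have : off u >= 2 * n * t by rewrite /off eqxx; lia.
  have : off v >= 2 * n * t by rewrite /off eqxx; lia.
  move=> h1 h2 H; have : chain Q [set u; v].
    apply/chainP=> a b; rewrite !inE => /orP[/eqP->|/eqP->] /orP[/eqP->|/eqP->]; rewrite ?eqxx //.
      by rewrite Quv.
    by rewrite Quv orbT.
  move/H; rewrite /m; move: (nat_of_ord (h u)) (nat_of_ord (h v)) (off u) (off v) h1 h2 => a b c d; nia.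
apply/forallP=> K; apply/implyP=> /chainP cK.
under eq_bigr => x _ do rewrite ffunE /=.
have notboth : ~~ ((u \in K) && (v \in K)).
  by apply/negP=> /andP[uK vK]; move: (cK u v uK vK uv); rewrite (negbTE nP).
have S1 : \sum_(x in K) (h x + off x).+1 = \sum_(x in K) (h x).+1 + \sum_(x in K) off x.
  by rewrite -big_split /=; apply: eq_bigr => x _; lia.
have S2 : \sum_(x in K) off x = 2 * n * t * (u \in K) + 2 * n * t * (v \in K).
  rewrite big_split /= -!big_distrr /= !sum_eq1 //.
have S3 : \sum_(x in K) (h x).+1 <= #|K| * t.
  rewrite -sum_nat_const; apply: leq_sum => x _; exact: ltn_ord.
have S4 : #|K| <= n by exact: max_card.
rewrite S1 S2 /m.
move: S3 S4 notboth; case: (u \in K); case: (v \in K) => //= S3 S4 _;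
  move: (\sum_(x in K) (h x).+1) (#|K|) S3 S4 => a b; nia.
Qed.

Lemma arith_contra (K B t : nat) : 0 < n -> t = K * B ^ n.-1 + 1 ->
  t ^ n <= K * (B * t) ^ n.-1 -> False.
Proof.
move=> n0 ->; case: n n0 => // k _ /=.
rewrite expnS expnMn mulnA leq_pmul2r ?expn_gt0 ?addn1 //; lia.
Qed.

Variables (P Q : rel V).
Hypotheses (irP : irreflexive P) (trP : transitive P) (irQ : irreflexive Q) (trQ : transitive Q).
Hypothesis PQ : forall x y, P x y -> Q x y || Q y x.

Lemma e_mono : #|Lr Q| <= #|Lr P|.
Proof.
rewrite leqNgt; apply/negP=> lt.
case: (posnP n) => [n0|n0].
  (* V empty: both Lr sets have the same unique element *)
  move: lt; have E : Lr Q = Lr P.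
    apply/setP=> f; rewrite !inE.
    have Vn : forall x : V, False by move=> x; have := n_pos x; rewrite n0.
    by apply: congr2; [done | apply: eq_forallb => x; case: (Vn x)].
  by rewrite E ltnn.
set t := n * n * n ^ n.-1 + 1.
set m := n * t.
have c1 := IOP_card Q m.
have c2 := IOP_card P m.
have h1 := IOP_le Q m.
have h2 := T1 irQ trQ m.
have h3 := subset_leq_card (W_mono m PQ).
have h4 := T2 irP trP m.
have h5 := OP_le P m.
have h6 := NI_card V m.
have h7 := Incr_lb V t.
apply: (@arith_contra (n * n) n t) => //.
apply: leq_trans h7 _.
move: lt c1 c2 h1 h2 h3 h4 h5 h6.
move: #|Lr Q| #|Lr P| #|Incr V m| #|IOP Q m| #|IOP P m| #|OPs Q m| #|OPs P m| #|W Q m| #|W P m| #|NI V m|.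
move=> a b c d e f g w1 w2 ni; rewrite -/m => ab -> -> ; nia.
Qed.

Lemma e_strict (u v : V) : Q u v -> ~~ (P u v || P v u) -> #|Lr Q| < #|Lr P|.
Proof.
move=> Quv nP; rewrite ltnNge; apply/negP=> le.
have uv : u != v by apply/eqP=> uv; rewrite uv irQ in Quv.
have n0 := n_pos u.
set t := n * n * (3 * n) ^ n.-1 + 1.
set m := 3 * n * t.
have c1 := IOP_card Q m.
have c2 := IOP_card P m.
have h1 := IOP_le Q m.
have h2 := T1 irQ trQ m.
have sub := W_mono m PQ.
have h4 := T2 irP trP m.
have h5 := OP_le P m.
have h6 := NI_card V m.
have g := W_gap t Quv nP uv.
rewrite -/m cardsDS // in g.
have h3 := subset_leq_card sub.
apply: (@arith_contra (n * n) (3 * n) t) => //.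
have -> : 3 * n * t = m by [].
move: le c1 c2 h1 h2 h3 h4 h5 h6 g.
move: #|Lr Q| #|Lr P| #|Incr V m| #|IOP Q m| #|IOP P m| #|OPs Q m| #|OPs P m| #|W Q m| #|W P m| #|NI V m|.
move=> a b c d e f g w1 w2 ni; rewrite -/m => ab -> -> ; nia.
Qed.

End Final.

Import Order.TTheory.
Section Glue.
Variable V : finType.

Lemma Lr_eq (r1 r2 : rel V) : r1 =2 r2 -> Lr r1 = Lr r2.
Proof.
move=> E; apply/setP=> f; rewrite !inE; congr (_ && _).
by apply: eq_forallb=> u; apply: eq_forallb=> v; rewrite E.
Qed.

Lemma ilt_eq (r1 r2 : rel V) : r1 =2 r2 -> induced_lt r1 =2 induced_lt r2.
Proof.
move=> E x y; rewrite /induced_lt; apply: eq_existsb => w.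
by rewrite E (eq_connect E).
Qed.
End Glue.

Unset Implicit Arguments.

Theorem theorem5p3 (V : finType) (e : rel V)
    (e_sym : symmetric e) (e_irr : irreflexive e)
    (e_comp : is_comparability_graph e)
    (O : rel V) (O_acyc : acyclic_orientation e O) :
  ((forall O' : rel V, acyclic_orientation e O' -> (sqnorm O' <= sqnorm O)%R)
     <-> transitive_orientation e O) /\
  (transitive_orientation e O <-> n_linext O = epsilon e).
Proof.
case: e_comp => lt [ltI [ltT ltE]].
have aLt : acyclic_orientation e lt := strict_acyc ltI ltT ltE.
have nmLt : nomixed e lt.
  by move=> v w w' lwv lvw'; rewrite ltE (ltT _ _ _ lwv lvw').
have oO := acyc_orient O_acyc.
split.
  have sO := sqnorm_split e O.
  have sLt := sqnorm_split e lt.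
  have AE := AO_const e_sym e_irr O_acyc aLt.
  have BLt : (\sum_p BO e lt p = \sum_p B' e p)%R.
    by apply: eq_bigr => p _; apply: (BO_eq e_sym) => //; exact: acyc_orient aLt.
  split=> [H|tO O' aO'].
    have hge := H lt aLt.
    rewrite sO sLt AE BLt lerD2l in hge.
    have hle : (\sum_p BO e O p <= \sum_p B' e p)%R by apply: ler_sum => p _; exact: (BO_le e_sym).
    have E0 : (\sum_p (B' e p - BO e O p) = 0)%R.
      by rewrite sumrB; apply/eqP; rewrite subr_eq0 eq_le hle hge.
    apply: (nomixed_trans e_sym) => //; apply: (BO_eq_nomixed e_sym) => // p.
    have nn : forall q, predT q -> (0 <= B' e q - BO e O q)%R.
      by move=> q _; rewrite subr_ge0; exact: (BO_le e_sym).
    have h := psumr_eq0P nn E0 (i := p) isT.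
    by apply/eqP; rewrite eq_sym -subr_eq0; apply/eqP; exact: h.
  have nmO := trans_nomixed tO.
  rewrite (sqnorm_split e O') sO (AO_const e_sym e_irr aO' O_acyc) lerD2l.
  have BOe : (\sum_p BO e O p = \sum_p B' e p)%R.
    by apply: eq_bigr => p _; exact: (BO_eq e_sym p oO nmO).
  rewrite BOe.
  by apply: ler_sum => p _; apply: (BO_le e_sym); exact: acyc_orient aO'.
have iltP (O' : rel V) : acyclic_orientation e O' -> #|Lr (induced_lt O')| <= #|Lr lt|.
  move=> aO'; apply: e_mono => //; first exact: ilt_irr aO'; first exact: ilt_trans.
  by move=> x y lxy; apply: ilt_edge (acyc_orient aO') _; rewrite ltE lxy.
have epsE : epsilon e = #|Lr lt|.
  apply/eqP; rewrite eqn_leq; apply/andP; split.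
    apply/bigmax_leqP=> F aF; rewrite /n_linext linextE; exact: iltP.
  pose F0 := [ffun p : V * V => lt p.1 p.2].
  have F0E : ffrel F0 =2 lt by move=> x y; rewrite /ffrel ffunE.
  have aF0 : acyclic_orientation e (ffrel F0) by apply: acyc_eq aLt => x y; rewrite F0E.
  apply: leq_trans (leq_bigmax_cond (F := fun F => n_linext (ffrel F)) _ aF0).
  rewrite /n_linext linextE (Lr_eq (ilt_eq F0E)) (Lr_eq (ilt_transrel ltT)).
  by [].
rewrite /n_linext linextE epsE; split=> [tO|E].
  apply/eqP; rewrite eqn_leq iltP //=.
  apply: e_mono => //; first exact: ilt_irr O_acyc; first exact: ilt_trans.
  move=> x y ixy; rewrite -ltE.
  case/andP: tO => _ /forallP/(_ x)/forallP/(_ y)/eqP ->; by rewrite ixy.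
case tO: (transitive_orientation e O) => //.
move: tO; rewrite /transitive_orientation O_acyc /= => /forallPn [x /forallPn [y H]].
have exy : e x y = false.
  by apply: negbTE; apply: contra H => exy; rewrite exy (ilt_edge oO exy).
have PQ : forall a b, lt a b -> induced_lt O a b || induced_lt O b a.
  by move=> a b lab; apply: ilt_edge oO _; rewrite ltE lab.
move: H; rewrite exy eq_sym eqbF_neg negbK => /orP[ixy|iyx].
- have := e_strict ltI ltT (ilt_irr O_acyc) (@ilt_trans _ O) PQ ixy.
  by rewrite -ltE exy E ltnn => /(_ isT).
- have := e_strict ltI ltT (ilt_irr O_acyc) (@ilt_trans _ O) PQ iyx.
  by rewrite -ltE e_sym exy E ltnn => /(_ isT).
Qed.
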